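(* In the curve-version universal shuffle algebra, for integers $n_1\ge n_2\ge\cdots\ge n_k$, $$z_1^{n_1}*\cdots*z_1^{n_k}=z_1^{n_1}\cdots z_k^{n_k}\sum_{\sigma\text{ admissible}}\ \prod_{i,j:\ \sigma(i)<\sigma(j)}(1-\Delta_{ij})\ +\ \dots,$$ where $\dots$ denotes a combination of monomials in $z_1,\dots,z_k$ of lower lexicographic order than $z_1^{n_1}\cdots z_k^{n_k}$, and a permutation $\sigma\in S(k)$ is called admissible if $i>j$ and $\sigma(i)<\sigma(j)$ imply $n_i=n_j$.
   Context: For $k\in\mathbb{N}$, $\mathbb{F}_k$ is the commutative ring generated over $\mathbb{Z}$ by $\Delta_{ij}$ ($1\le i\ne j\le k$) subject to $\Delta_{ij}=\Delta_{ji}$ and $\Delta_{ij}\cdot P=0$ for every expression $P$ anti-symmetric in $i,j$. $S(k)$ acts on $\mathbb{F}_k$ by permuting indices; $\iota_{\mathrm{first}}:\mathbb{F}_k\to\mathbb{F}_{k+k'}$, $\Delta_{ij}\mapsto\Delta_{ij}$; $\iota_{\mathrm{last}}:\mathbb{F}_{k'}\to\mathbb{F}_{k+k'}$, $\Delta_{ij}\mapsto\Delta_{i+k,j+k}$. $\zeta_{ij}(x)=1+\Delta_{ij}\frac{x}{1-x}$. The shuffle product on $\bigoplus_k\mathbb{F}_k(z_1,\dots,z_k)^{\mathrm{Sym}}$ (functions invariant under simultaneous permutation of variables and indices) is $$R*R'=\mathrm{Sym}\Big[\iota_{\mathrm{first}}(R)(z_1,..,z_k)\,\iota_{\mathrm{last}}(R')(z_{k+1},..,z_{k+k'})\prod_{1\le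 i\le k<j\le k+k'}\zeta_{ij}(z_i/z_j)\Big],$$ $\mathrm{Sym}\,F=\sum_{\sigma\in S(k+k')}(\sigma\circ F)(z_{\sigma(1)},\dots,z_{\sigma(k+k')})$, with $\sigma$ acting on coefficients as well. Elements $z_1^{n_1}*\cdots*z_1^{n_k}$ are Laurent polynomials in $z_1,\dots,z_k$ with coefficients in $\mathbb{F}_k$. *)

(* Defs.v *)
From HB Require Import structures.
From mathcomp Require Import all_boot all_order all_algebra all_fingroup.
From mathcomp Require Import mpoly.
Set Implicit Arguments.
Unset Strict Implicit.
Unset Printing Implicit Defensive.
Import Order.TTheory GRing.Theory.
Local Open Scope ring_scope.

(* Formal "expressions" in the Delta's are integer polynomials in       *)
(* variables indexed by ordered pairs (a,b) of 'I_k; a polynomial P is  *)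
(* read as an expression in the Delta_ab by identifying the variable    *)
(* (a,b) with (b,a) (Delta_ab = Delta_ba); diagonal variables (a,a),    *)
(* which do not correspond to any generator, are sent to 0.             *)

Definition npairs (k : nat) := #|{: 'I_k * 'I_k}|.

Definition dexpr (k : nat) := {mpoly int[npairs k]}.

Definition pair_ren (k : nat) (s : 'S_k) (v : 'I_(npairs k)) : 'I_(npairs k) :=
  let a := s (enum_val v).1 in
  let b := s (enum_val v).2 in
  enum_rank (if (a <= b)%N then (a, b) else (b, a)).

Definition dact (k : nat) (s : 'S_k) (P : dexpr k) : dexpr k :=
  mmap (fun c : int => c%:MP) (fun v => 'X_(pair_ren s v)) P.

Definition antisym (k : nat) (i j : 'I_k) (P : dexpr k) : Prop :=
  dact (tperm i j) P = - dact 1 P.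

Definition deval (k : nat) (F : comNzRingType) (D : 'I_k -> 'I_k -> F)
    (P : dexpr k) : F :=
  mmap (fun c : int => c%:~R)
    (fun v => if (enum_val v).1 == (enum_val v).2 then 0
              else D (enum_val v).1 (enum_val v).2) P.

(* (F, D) satisfies the defining relations of F_k:
   Delta_ij = Delta_ji and Delta_ij * P = 0 for P anti-symmetric in i,j *)
Definition Fk_relations (k : nat) (F : comNzRingType) (D : 'I_k -> 'I_k -> F) :
    Prop :=
  (forall i j, D i j = D j i) /\
  (forall (i j : 'I_k), i != j ->
     forall P : dexpr k, antisym i j P -> D i j * deval D P = 0).

(* Rational functions in z_1..z_k with coefficients in F, represented  *)
(* as fractions num/den of polynomials in {mpoly F[k]}.  All            *)
(* denominators occurring below are products of z_i and (z_j - z_i),   *)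
(* which are non-zero-divisors, so equality in the localisation is      *)
(* cross-multiplication.                                                *)

Section Frac.
Variable R : comNzRingType.
Definition frac := (R * R)%type.
Definition fconst (c : R) : frac := (c, 1).
Definition fzero : frac := (0, 1).
Definition fone : frac := (1, 1).
Definition fadd (x y : frac) : frac := (x.1 * y.2 + y.1 * x.2, x.2 * y.2).
Definition fsub (x y : frac) : frac := (x.1 * y.2 - y.1 * x.2, x.2 * y.2).
Definition fmul (x y : frac) : frac := (x.1 * y.1, x.2 * y.2).
Definition fdiv (x y : frac) : frac := (x.1 * y.2, x.2 * y.1).
Definition feq (x y : frac) : Prop := x.1 * y.2 = y.1 * x.2.
End Frac.

Section Shuffle.
Variables (k : nat) (F : comNzRingType).
Local Notation Rz := {mpoly F[k]}.

Definition zvar (i : 'I_k) : frac Rz := ('X_i, 1).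

Definition zpow (i : 'I_k) (e : int) : frac Rz :=
  match e with
  | Posz m => ('X_i ^+ m, 1)
  | Negz m => (1, 'X_i ^+ m.+1)
  end.

Definition zmono (m : 'I_k -> int) : frac Rz :=
  \big[@fmul _/fone _]_(i < k) zpow i (m i).

Definition zeta (d : F) (x : frac Rz) : frac Rz :=
  fadd (fone _) (fmul (fconst d%:MP) (fdiv x (fsub (fone _) x))).

(* z_1^{n_1} * ... * z_1^{n_k}
   = Sym [ z_1^{n_1} ... z_k^{n_k} prod_{i<j} zeta_ij (z_i / z_j) ],
   Sym summing over all sigma in S(k), sigma acting simultaneously on the
   variables and on the indices of the Delta's. *)
Definition shuffle_monomials (D : 'I_k -> 'I_k -> F) (n : 'I_k -> int) :
    frac Rz :=
  \big[@fadd _/fzero _]_(s : 'S_k)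
    fmul (\big[@fmul _/fone _]_(i < k) zpow (s i) (n i))
         (\big[@fmul _/fone _]_(i < k) \big[@fmul _/fone _]_(j < k | (i < j)%N)
             zeta (D (s i) (s j)) (fdiv (zvar (s i)) (zvar (s j)))).

Definition laurent (r : seq ({ffun 'I_k -> int} * F)) : frac Rz :=
  \big[@fadd _/fzero _]_(mc <- r) fmul (fconst (mc.2)%:MP) (zmono mc.1).

End Shuffle.

Definition lexlt (k : nat) (m n : 'I_k -> int) : Prop :=
  exists i : 'I_k, (forall j : 'I_k, (j < i)%N -> m j = n j) /\ m i < n i.

Definition admissible (k : nat) (n : 'I_k -> int) (s : 'S_k) : bool :=
  [forall i : 'I_k, forall j : 'I_k,
     ((j < i)%N && (s i < s j)%N) ==> (n i == n j)].

Definition lead_coef_shuffle (k : nat) (F : comNzRingType)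
    (D : 'I_k -> 'I_k -> F) (n : 'I_k -> int) : F :=
  \sum_(s : 'S_k | admissible n s)
     \prod_(i : 'I_k) \prod_(j : 'I_k | (i < j)%N && (s i < s j)%N) (1 - D i j).

(* Main.v *)
Require Import Defs.
From HB Require Import structures.
From mathcomp Require Import all_boot all_order all_algebra all_fingroup.
From mathcomp Require Import mpoly.
From mathcomp Require Import ring zify.
Import GRing.Theory.
Local Open Scope ring_scope.

Module PartA.
Set Implicit Arguments.
Unset Strict Implicit.
Unset Printing Implicit Defensive.
Import GRing.Theory.
Local Open Scope ring_scope.

Section FracLemmas.
Variable R : comNzRingType.
Implicit Types x y : Defs.frac R.

Lemma bigfmulE (I : Type) (r : seq I) (P : pred I) (G : I -> Defs.frac R) :
  \big[@fmul R/fone R]_(i <- r | P i) G i =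
  (\prod_(i <- r | P i) (G i).1, \prod_(i <- r | P i) (G i).2).
Proof.
elim: r => [|x r IH]; first by rewrite !big_nil.
rewrite !big_cons; case: (P x) => //; by rewrite IH.
Qed.

Lemma feq_fmul x x' y y' : feq x x' -> feq y y' -> feq (fmul x y) (fmul x' y').
Proof.
rewrite /feq /fmul /= => h1 h2.
by rewrite mulrACA h1 h2 mulrACA.
Qed.

Lemma feq_bigfmul (I : Type) (r : seq I) (P : pred I) (G H : I -> Defs.frac R) :
  (forall i, P i -> feq (G i) (H i)) ->
  feq (\big[@fmul R/fone R]_(i <- r | P i) G i) (\big[@fmul R/fone R]_(i <- r | P i) H i).
Proof.
move=> h; rewrite !bigfmulE /feq /= -!big_split /=.
by apply: eq_bigr => i Pi; apply: h.
Qed.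

Lemma feq_bigfadd (I : Type) (r : seq I) (P : pred I) (G : I -> Defs.frac R)
   (a : I -> R) (B : R) :
  (forall i, P i -> feq (G i) (a i, B)) ->
  feq (\big[@fadd R/fzero R]_(i <- r | P i) G i) (\sum_(i <- r | P i) a i, B).
Proof.
move=> h; elim: r => [|x r IH]; first by rewrite !big_nil /feq /= mul0r mul0r.
rewrite !big_cons; case Px: (P x) => //.
move: (h x Px) IH; rewrite /feq /fadd /= => h1 h2.
set S := \big[_/_]_(j <- r | P j) G j in h2 *.
set s := \sum_(j <- r | P j) a j in h2 *.
have -> : ((G x).1 * S.2 + S.1 * (G x).2) * B =
   ((G x).1 * B) * S.2 + (S.1 * B) * (G x).2 by ring.
rewrite h1 h2; ring.
Qed.

Lemma feq_fadd_common (a b B : R) x y : feq x (a, B) -> feq y (b, B) ->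
  feq (fadd x y) (a + b, B).
Proof.
rewrite /feq /fadd /= => h1 h2.
have -> : (x.1 * y.2 + y.1 * x.2) * B = (x.1 * B) * y.2 + (y.1 * B) * x.2 by ring.
rewrite h1 h2; ring.
Qed.

End FracLemmas.

End PartA.
Import PartA.

Module PartE.
Set Implicit Arguments.
Unset Strict Implicit.
Unset Printing Implicit Defensive.
Import GRing.Theory.
Local Open Scope ring_scope.

Section Lex.
Variable k : nat.
Implicit Types a b c m : 'X_{1..k}.

Definition mlt a b : bool :=
  [exists i : 'I_k, [forall j : 'I_k, (j < i)%N ==> (a j == b j)] && (a i < b i)%N].
Definition mle a b := (a == b) || mlt a b.

Lemma mltP a b : reflect (exists i : 'I_k, (forall j : 'I_k, (j < i)%N -> a j = b j) /\ (a i < b i)%N) (mlt a b).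
Proof.
apply: (iffP existsP) => [[i /andP[/forallP h1 h2]]|[i [h1 h2]]]; exists i.
  by split=> // j ji; apply/eqP; move: (h1 j); rewrite ji.
by rewrite h2 andbT; apply/forallP => j; apply/implyP => /h1 ->.
Qed.

Lemma mlt_irr a : ~~ mlt a a.
Proof. by apply/mltP => -[i [_]]; rewrite ltnn. Qed.

Lemma mlt_trans a b c : mlt a b -> mlt b c -> mlt a c.
Proof.
move=> /mltP[i [h1 h2]] /mltP[j [h3 h4]]; apply/mltP.
case: (ltngtP i j) => [ij|ji|/val_inj eij].
- exists i; split; first by move=> t ti; rewrite h1 // h3 // (ltn_trans ti ij).
  by rewrite -(h3 i ij).
- exists j; split; first by move=> t tj; rewrite h1 ?h3 // (ltn_trans tj ji).
  by rewrite (h1 j ji).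
- subst j; exists i; split; first by move=> t ti; rewrite h1 ?h3.
  exact: ltn_trans h2 h4.
Qed.

Lemma mlt_total a b : a != b -> mlt a b || mlt b a.
Proof.
move=> nab.
have [i0 Hi0] : exists i : 'I_k, a i != b i.
  apply/existsP; apply: contraR nab => /existsPn h.
  by apply/eqP/mnmP => i; apply/eqP; move: (h i); rewrite negbK.
case: (@arg_minnP _ i0 (fun i : 'I_k => a i != b i) (fun i : 'I_k => val i) Hi0) => i hi hmin.
have hlt : forall j : 'I_k, (j < i)%N -> a j = b j.
  move=> j ji; apply/eqP; apply: contraTT ji => hj; rewrite -leqNgt; exact: hmin.
case: (ltngtP (a i) (b i)) => [h|h|h].
- by apply/orP; left; apply/mltP; exists i.
- by apply/orP; right; apply/mltP; exists i; split => // j /hlt ->.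
- by rewrite h eqxx in hi.
Qed.

Lemma mlt_addr a b c : mlt a b -> mlt (a + c)%MM (b + c)%MM.
Proof.
move=> /mltP[i [h1 h2]]; apply/mltP; exists i; split.
  by move=> j /h1; rewrite !mnmDE => ->.
by rewrite !mnmDE ltn_add2r.
Qed.

Lemma mlt_addl a b c : mlt a b -> mlt (c + a)%MM (c + b)%MM.
Proof. by rewrite ![(c + _)%MM]addmC; apply: mlt_addr. Qed.

Lemma mle_refl a : mle a a.
Proof. by rewrite /mle eqxx. Qed.

Lemma mle_trans a b c : mle a b -> mle b c -> mle a c.
Proof.
rewrite /mle => /orP[/eqP->//|h1] /orP[/eqP<-|h2]; first by rewrite h1 orbT.
by rewrite (mlt_trans h1 h2) orbT.
Qed.

Lemma mle_mlt_trans a b c : mle a b -> mlt b c -> mlt a c.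
Proof. by rewrite /mle => /orP[/eqP->//|h1] h2; apply: mlt_trans h1 h2. Qed.

Lemma mlt_mle_trans a b c : mlt a b -> mle b c -> mlt a c.
Proof. by rewrite /mle => h1 /orP[/eqP<-//|h2]; apply: mlt_trans h1 h2. Qed.

Lemma mleNgt a b : mle a b = ~~ mlt b a.
Proof.
rewrite /mle; case: (eqVneq a b) => [->|nab]; first by rewrite mlt_irr.
rewrite orFb; case h: (mlt a b).
  apply/esym/negP => h2; move: (mlt_trans h h2); by rewrite (negbTE (mlt_irr _)).
by move: (mlt_total nab); rewrite h orFb => ->.
Qed.

Lemma mle_anti a b : mle a b -> mle b a -> a = b.
Proof.
rewrite /mle => /orP[/eqP//|h1] /orP[/eqP//|h2].
by move: (mlt_trans h1 h2); rewrite (negbTE (mlt_irr _)).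
Qed.

Lemma mle_add a a' b b' : mle a a' -> mle b b' -> mle (a + b)%MM (a' + b')%MM.
Proof.
rewrite {1}/mle => /orP[/eqP->|h1].
  rewrite /mle => /orP[/eqP->|h2]; first by rewrite eqxx.
  by rewrite mlt_addl // orbT.
move=> h2; apply/orP; right; apply: (mlt_mle_trans (mlt_addr b h1)).
move: h2; rewrite /mle => /orP[/eqP->|h2]; first by rewrite eqxx.
by rewrite mlt_addl // orbT.
Qed.

Lemma mlt_add a a' b b' : mlt a a' -> mle b b' -> mlt (a + b)%MM (a' + b')%MM.
Proof.
move=> h1 h2; apply: (mlt_mle_trans (mlt_addr b h1)).
move: h2; rewrite /mle => /orP[/eqP->|h2]; first by rewrite eqxx.
by rewrite mlt_addl // orbT.
Qed.

Lemma mle_add_eq a a' b b' : mle a a' -> mle b b' -> (a + b)%MM = (a' + b')%MM ->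
  a = a' /\ b = b'.
Proof.
move=> h1 h2 e.
have eaa : a = a'.
  move: h1; rewrite /mle => /orP[/eqP//|h1].
  by move: (mlt_add h1 h2); rewrite e (negbTE (mlt_irr _)).
split=> //; subst a'.
move: h2; rewrite /mle => /orP[/eqP//|h2].
by move: (mlt_addl a h2); rewrite e (negbTE (mlt_irr _)).
Qed.

Lemma seq_max (s : seq 'X_{1..k}) : s != [::] ->
  exists2 m, m \in s & forall x, x \in s -> mle x m.
Proof.
elim: s => [//|y s IH] _.
case: (eqVneq s [::]) => [->|/IH [m ms hm]].
  by exists y; rewrite ?mem_seq1 // => x; rewrite mem_seq1 => /eqP->; apply: mle_refl.
case: (boolP (mle y m)) => hym.
  exists m; first by rewrite in_cons ms orbT.
  by move=> x; rewrite in_cons => /orP[/eqP->//|/hm].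
exists y; first by rewrite in_cons eqxx.
rewrite mleNgt negbK in hym.
move=> x; rewrite in_cons => /orP[/eqP->|/hm h]; first by apply: mle_refl.
by apply: mle_trans h _; rewrite /mle hym orbT.
Qed.

End Lex.

Section Bnd.
Variables (k : nat) (F : comNzRingType).
Local Notation Rz := {mpoly F[k]}.
Implicit Types P Q : Rz.

Definition bnd P (a : 'X_{1..k}) (al : F) :=
  (forall m, m \in msupp P -> mle m a) /\ P@_a = al.

Lemma coef_supp P a : \sum_(x <- msupp P) P@_x * (x == a)%:R = P@_a.
Proof.
rewrite {3}(mpolyE P) raddf_sum /=; apply: eq_bigr => x _.
by rewrite mcoeffZ mcoeffX.
Qed.

Lemma mcoeffM_supp P Q m : (P * Q)@_m =
  \sum_(x <- msupp P) \sum_(y <- msupp Q) P@_x * Q@_y * ((x + y)%MM == m)%:R.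
Proof.
rewrite {1}(mpolyE P) {1}(mpolyE Q) mulr_suml raddf_sum /=.
apply: eq_bigr => x _; rewrite mulr_sumr raddf_sum /=; apply: eq_bigr => y _.
by rewrite -scalerAr -scalerAl scalerA -mpolyXD mcoeffZ mcoeffX [Q@_y * _]mulrC.
Qed.

Lemma bnd_coef_lt P a al m : bnd P a al -> mlt a m -> P@_m = 0.
Proof.
move=> [h _] am; apply/eqP; apply: contraTT am => hm.
rewrite -mleNgt; apply: h; by rewrite mcoeff_msupp.
Qed.

Lemma sum_neq0 (T : eqType) (s : seq T) (G : T -> F) :
  \sum_(x <- s) G x != 0 -> exists2 x, x \in s & G x != 0.
Proof.
elim: s => [|x s IH]; first by rewrite big_nil eqxx.
rewrite big_cons; case: (eqVneq (G x) 0) => [->|hx] h.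
  by rewrite add0r in h; have [y ys hy] := IH h; exists y; rewrite ?in_cons ?ys ?orbT.
by exists x; rewrite ?in_cons ?eqxx.
Qed.

Lemma bndM P Q a b al be : bnd P a al -> bnd Q b be -> bnd (P * Q) (a + b)%MM (al * be).
Proof.
move=> [hP eP] [hQ eQ]; split.
  move=> m; rewrite mcoeff_msupp mcoeffM_supp => /sum_neq0 [x xP /sum_neq0 [y yQ]].
  case: (eqVneq (x + y)%MM m) => [<- _|ne]; last by rewrite mulr0 eqxx.
  exact: mle_add (hP x xP) (hQ y yQ).
rewrite mcoeffM_supp.
transitivity (\sum_(x <- msupp P) \sum_(y <- msupp Q)
   ((P@_x * (x == a)%:R) * (Q@_y * (y == b)%:R))).
  apply: eq_big_seq => x xP; apply: eq_big_seq => y yQ.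
  have -> : ((x + y)%MM == (a + b)%MM) = (x == a) && (y == b).
    apply/eqP/andP => [e|[/eqP-> /eqP->]] //.
    by have [-> ->] := mle_add_eq (hP x xP) (hQ y yQ) e; rewrite !eqxx.
  by case: (x == a); case: (y == b); rewrite /= ?mulr1 ?mulr0 ?mul0r.
by rewrite -big_distrlr /= !coef_supp eP eQ.
Qed.

Lemma bnd_max P : P != 0 -> exists a, bnd P a P@_a /\ P@_a != 0.
Proof.
rewrite -msupp_eq0 => /seq_max [a aP ha]; exists a; split; first by split.
by rewrite -mcoeff_msupp.
Qed.

Lemma bnd_reg P a al be Q : bnd P a al -> be * al = 1 -> P * Q = 0 -> Q = 0.
Proof.
move=> hb hu e; apply/eqP; apply/negP => /negP /bnd_max [b [hQ nz]].
have [_] := bndM hb hQ; rewrite e mcoeff0 => /(congr1 (fun x => be * x)).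
by rewrite mulr0 mulrA hu mul1r => /esym/eqP; rewrite (negbTE nz).
Qed.

Lemma bndX m : bnd 'X_[m] m 1.
Proof.
split; last by rewrite mcoeffX eqxx.
by move=> x; rewrite msuppX mem_seq1 => /eqP->; apply: mle_refl.
Qed.

Lemma bnd_prod (I : eqType) (r : seq I) (P : pred I) (G : I -> Rz) (A : I -> 'X_{1..k}) (al : I -> F) :
  (forall i, i \in r -> P i -> bnd (G i) (A i) (al i)) ->
  bnd (\prod_(i <- r | P i) G i) (\sum_(i <- r | P i) A i)%MM (\prod_(i <- r | P i) al i).
Proof.
elim: r => [|x r IH] h.
  rewrite !big_nil; have := bndX 0%MM; by rewrite mpolyX0.
have IH' : bnd (\prod_(i <- r | P i) G i) (\sum_(i <- r | P i) A i)%MM (\prod_(i <- r | P i) al i).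
  by apply: IH => i ir; apply: h; rewrite in_cons ir orbT.
rewrite !big_cons; case Px: (P x) => //.
by apply: bndM => //; apply: h; rewrite ?in_cons ?eqxx.
Qed.

Lemma bndN P a al : bnd P a al -> bnd (- P) a (- al).
Proof.
move=> [h e]; split; last by rewrite mcoeffN e.
by move=> m; rewrite (perm_mem (msuppN P)); apply: h.
Qed.

Lemma bnd_uniq P a b al be : bnd P a al -> bnd P b be -> al != 0 -> be != 0 -> a = b.
Proof.
move=> [h1 e1] [h2 e2] n1 n2; apply: mle_anti.
  by apply: h2; rewrite mcoeff_msupp e1.
by apply: h1; rewrite mcoeff_msupp e2.
Qed.

End Bnd.

End PartE.
Import PartE.

Module PartP.
Set Implicit Arguments.
Unset Strict Implicit.
Unset Printing Implicit Defensive.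
Import GRing.Theory.
Local Close Scope ring_scope.

Section PermP.
Variables (k : nat) (p : 'I_k -> nat).
Hypothesis hp : forall i j : 'I_k, (i <= j)%N -> (p j <= p i)%N.

Lemma imset_perm_eq (s : 'S_k) (P : {set 'I_k}) : s @: P \subset P -> s @: P = P.
Proof.
move=> sub; apply/eqP; rewrite eqEcard sub /= card_imset //; exact: perm_inj.
Qed.

Lemma perm_mle (s : 'S_k) : mle [multinom p (s j) | j < k] [multinom p j | j < k].
Proof.
rewrite mleNgt; apply/negP => /mltP [i [h1 h2]].
rewrite !mnmE in h2.
pose P := [set j | (p i < p j)%N].
have sub : s @: P \subset P.
  apply/subsetP => x /imsetP [j]; rewrite inE => hj ->.
  have ji : (j < i)%N by rewrite ltnNge; apply/negP => /hp; rewrite leqNgt hj.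
  by rewrite inE; move: (h1 j ji); rewrite !mnmE => <-.
have e := imset_perm_eq sub.
have : s i \in s @: P by rewrite e inE.
by rewrite mem_imset; [rewrite inE ltnn | exact: perm_inj].
Qed.

Lemma perm_fix_adm (s : 'S_k) :
  (forall j, p (s j) = p j) <->
  (forall i j : 'I_k, (j < i)%N -> (s i < s j)%N -> p i = p j).
Proof.
split.
  move=> h i j ji sij; apply/eqP; rewrite eqn_leq hp ?(ltnW ji) //=.
  by rewrite -[p j]h -[p i]h hp // ltnW.
move=> adm.
have key : forall v, s @: [set j | (v < p j)%N] = [set j | (v < p j)%N].
  move=> v; set P := [set j | (v < p j)%N]; apply: imset_perm_eq.
  apply/subsetP => x /imsetP [a aP ->]; apply/negPn/negP => saP.
  have nsub : ~~ (P \subset s @: P).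
    apply/negP => sub.
    have eP : P = s @: P.
      by apply/eqP; rewrite eqEcard sub (card_imset _ (@perm_inj _ s)) leqnn.
    by move: saP; rewrite eP imset_f.
  have [y yP ynot] : exists2 y, y \in P & y \notin s @: P.
    by move/subsetPn: nsub => [y ??]; exists y.
  set b := (s^-1)%g y.
  have yb : y = s b by rewrite /b permKV.
  have bP : b \notin P by apply: contra ynot => bP; rewrite yb imset_f.
  move: aP bP; rewrite !inE -leqNgt => aP bP.
  have pab : (p b < p a)%N := leq_ltn_trans bP aP.
  have ab : (a < b)%N by rewrite ltnNge; apply/negP => /hp; rewrite leqNgt pab.
  have sab : (s a < s b)%N.
    rewrite ltn_neqAle; apply/andP; split.
      by apply/negP => /eqP /val_inj /perm_inj e; rewrite e ltnn in ab.
    rewrite leqNgt; apply/negP => sba.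
    by move: (adm b a ab sba) pab => ->; rewrite ltnn.
  move: saP; rewrite inE -leqNgt => saP.
  move: yP; rewrite inE yb => yP.
  have := hp (ltnW sab); move=> h.
  by move: (leq_trans yP h); rewrite ltnNge saP.
move=> j.
have e1 : (s j \in [set x | (p j < p x)%N]) = (j \in [set x | (p j < p x)%N]).
  by rewrite -{1}(key (p j)) mem_imset //; exact: perm_inj.
have e2 : (s j \in [set x | (p (s j) < p x)%N]) = (j \in [set x | (p (s j) < p x)%N]).
  by rewrite -{1}(key (p (s j))) mem_imset //; exact: perm_inj.
move: e1 e2; rewrite !inE !ltnn => e1 e2.
have h1 : (p (s j) <= p j)%N by rewrite leqNgt e1.
have h2 : (p j <= p (s j))%N by rewrite leqNgt -e2.
by apply/eqP; rewrite eqn_leq h1 h2.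
Qed.

End PermP.

End PartP.
Import PartP.

Module PartC.
Set Implicit Arguments.
Unset Strict Implicit.
Unset Printing Implicit Defensive.
Import GRing.Theory.
Local Open Scope ring_scope.

Section Sign.
Variables (k : nat) (F : comNzRingType).
Local Notation Rz := {mpoly F[k]}.

Definition Dden (s : 'S_k) : Rz :=
  \prod_(i < k) \prod_(j < k | (i < j)%N) ('X_(s j) - 'X_(s i)).

Lemma Dden_det (s : 'S_k) :
  Dden s = \det (Vandermonde k (\row_j ('X_(s j) : Rz))).
Proof.
rewrite det_Vandermonde; apply: eq_bigr => i _; apply: eq_bigr => j _.
by rewrite !mxE.
Qed.

Lemma Dden_sign (s : 'S_k) : Dden s = (-1) ^+ s * Dden 1.
Proof.
rewrite !Dden_det.
have -> : Vandermonde k (\row_j ('X_(s j) : Rz)) =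
          col_perm s (Vandermonde k (\row_j ('X_((1%g : 'S_k) j) : Rz))).
  by apply/matrixP => i j; rewrite !mxE perm1.
by rewrite col_permE det_mulmx det_perm odd_permV mulrC.
Qed.

End Sign.

End PartC.
Import PartC.

Module PartB.
Set Implicit Arguments.
Unset Strict Implicit.
Unset Printing Implicit Defensive.
Import GRing.Theory Num.Theory.
Local Open Scope ring_scope.

Section Terms.
Variables (k : nat) (F : comNzRingType).
Local Notation Rz := {mpoly F[k]}.
Variable q : nat.

Lemma feq_eqr (x y y' : Defs.frac Rz) : feq x y -> y = y' -> feq x y'.
Proof. by move=> h <-. Qed.

Lemma feq_sign (x : Defs.frac Rz) (A B W e : Rz) : e * e = 1 ->
  feq x (A, B * (e * W)) -> feq x (e * A, B * W).
Proof.
rewrite /feq /= => hs h.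
rewrite -[LHS]mul1r -hs.
have -> : e * e * (x.1 * (B * W)) = e * (x.1 * (B * (e * W))) by ring.
rewrite h; ring.
Qed.

Lemma zpow_feq (a : 'I_k) (e : int) : 0 <= q%:Z + e ->
  feq (zpow F a e) ('X_a ^+ (absz (q%:Z + e)), 'X_a ^+ q).
Proof.
case: e => m h; rewrite /feq /=.
  by rewrite mulr1 -exprD addnC.
rewrite NegzE in h *.
have hm : (m.+1 <= q)%N by rewrite -lez_nat -subr_ge0.
rewrite subzn // absz_nat mul1r -exprD subnK //.
Qed.

Lemma zeta_feq (d : F) (a b : 'I_k) :
  feq (zeta d (fdiv (zvar F a) (zvar F b))) ('X_b - 'X_a + d%:MP * 'X_a, 'X_b - 'X_a).
Proof. rewrite /feq /=; ring. Qed.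


Variable D : 'I_k -> 'I_k -> F.
Variable n : 'I_k -> int.
Hypothesis hq : forall i, 0 <= q%:Z + n i.

Definition pp (i : 'I_k) : nat := absz (q%:Z + n i).
Definition pm (s : 'S_k) : 'X_{1..k} := [multinom pp ((s^-1)%g j) | j < k].
Definition Zq : Rz := \prod_(i < k) 'X_i ^+ q.
Definition fpol (d : F) (a b : 'I_k) : Rz := 'X_b - 'X_a + d%:MP * 'X_a.
Definition Pf (s : 'S_k) : Rz :=
  \prod_(i < k) \prod_(j < k | (i < j)%N) fpol (D (s i) (s j)) (s i) (s j).
Definition Nsum : Rz := \sum_(s : 'S_k) (-1) ^+ odd_perm s * ('X_[pm s] * Pf s).

Lemma term_feq (s : 'S_k) :
  feq (fmul (\big[@fmul _/fone _]_(i < k) zpow F (s i) (n i))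
         (\big[@fmul _/fone _]_(i < k) \big[@fmul _/fone _]_(j < k | (i < j)%N)
             zeta (D (s i) (s j)) (fdiv (zvar F (s i)) (zvar F (s j)))))
      ((-1) ^+ odd_perm s * ('X_[pm s] * Pf s), Zq * Dden F 1).
Proof.
have h1 : feq (\big[@fmul _/fone _]_(i < k) zpow F (s i) (n i)) ('X_[pm s], Zq).
  apply: feq_eqr; first by apply: feq_bigfmul => i _; apply: zpow_feq.
  rewrite bigfmulE /= (mpolyXE _ s) /Zq; congr pair.
    by apply: eq_bigr => i _; rewrite mnmE permK.
  by rewrite [RHS](reindex_inj (@perm_inj _ s)).
have h2 : feq (\big[@fmul _/fone _]_(i < k) \big[@fmul _/fone _]_(j < k | (i < j)%N)
             zeta (D (s i) (s j)) (fdiv (zvar F (s i)) (zvar F (s j)))) (Pf s, Dden F s).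
  apply: feq_eqr.
    apply: feq_bigfmul => i _; apply: feq_eqr.
      by apply: feq_bigfmul => j _; apply: zeta_feq.
    by rewrite bigfmulE.
  by rewrite bigfmulE.
have hs : ((-1) ^+ odd_perm s : Rz) * (-1) ^+ odd_perm s = 1 by rewrite -expr2 sqrr_sign.
apply: (feq_sign hs); rewrite -Dden_sign; exact: (feq_fmul h1 h2).
Qed.

Lemma shuffle_feq : feq (shuffle_monomials D n) (Nsum, Zq * Dden F 1).
Proof. by apply: feq_bigfadd => s _; apply: term_feq. Qed.

End Terms.

End PartB.
Import PartB.

Module PartD1.
Set Implicit Arguments.
Unset Strict Implicit.
Unset Printing Implicit Defensive.
Import GRing.Theory.
Local Open Scope ring_scope.

Section Div.
Variables (k : nat) (F : comNzRingType).
Local Notation Rz := {mpoly F[k]}.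

Definition sub (a b : 'I_k) (P : Rz) : Rz :=
  mmap (@mpolyC k F) (fun i => if i == b then 'X_a else 'X_i) P.

Lemma subM a b (P Q : Rz) : sub a b (P * Q) = sub a b P * sub a b Q.
Proof. by rewrite /sub rmorphM. Qed.
Lemma subB a b (P Q : Rz) : sub a b (P - Q) = sub a b P - sub a b Q.
Proof. by rewrite /sub rmorphB. Qed.
Lemma subD a b (P Q : Rz) : sub a b (P + Q) = sub a b P + sub a b Q.
Proof. by rewrite /sub rmorphD. Qed.
Lemma subC a b (c : F) : sub a b c%:MP = c%:MP.
Proof. by rewrite /sub mmapC. Qed.
Lemma subX a b i : sub a b 'X_i = if i == b then 'X_a else 'X_i.
Proof. by rewrite /sub mmapX mmap1U. Qed.
Lemma sub_prod a b (I : Type) (r : seq I) (P : pred I) (G : I -> Rz) :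
  sub a b (\prod_(i <- r | P i) G i) = \prod_(i <- r | P i) sub a b (G i).
Proof. by rewrite /sub rmorph_prod. Qed.
Lemma subXn a b (P : Rz) e : sub a b (P ^+ e) = sub a b P ^+ e.
Proof. by rewrite /sub rmorphXn. Qed.
Lemma sub_sum a b (I : Type) (r : seq I) (P : pred I) (G : I -> Rz) :
  sub a b (\sum_(i <- r | P i) G i) = \sum_(i <- r | P i) sub a b (G i).
Proof. by rewrite /sub raddf_sum. Qed.

Section DV.
Variables a b : 'I_k.
Definition dv (P : Rz) := exists Q, P - sub a b P = ('X_b - 'X_a) * Q.

Lemma dv_mul P Q : dv P -> dv Q -> dv (P * Q).
Proof.
move=> [u hu] [v hv]; exists (u * Q + sub a b P * v).
rewrite subM mulrDr mulrA -hu mulrA [_ * sub a b P]mulrC -mulrA -hv; ring.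
Qed.

Lemma dv_C c : dv c%:MP.
Proof. by exists 0; rewrite subC subrr mulr0. Qed.

Lemma dv_X i : dv 'X_i.
Proof.
exists (if i == b then 1 else 0); rewrite subX.
by case: eqP => [->|_]; rewrite ?mulr1 ?mulr0 ?subrr.
Qed.

Lemma dv_prod (I : Type) (r : seq I) (G : I -> Rz) :
  (forall i, dv (G i)) -> dv (\prod_(i <- r) G i).
Proof.
move=> h; elim: r => [|x r IH]; first by rewrite big_nil -mpolyC1; apply: dv_C.
by rewrite big_cons; apply: dv_mul.
Qed.

Lemma dv_exp P e : dv P -> dv (P ^+ e).
Proof.
move=> h; elim: e => [|e IH]; first by rewrite expr0 -mpolyC1; apply: dv_C.
by rewrite exprS; apply: dv_mul.
Qed.

Lemma dv_add P Q : dv P -> dv Q -> dv (P + Q).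
Proof.
move=> [u hu] [v hv]; exists (u + v); rewrite subD mulrDr -hu -hv; ring.
Qed.

Lemma dv_all P : dv P.
Proof.
elim/mpolyind: P => [|c m p _ _ h]; first by rewrite -mpolyC0; apply: dv_C.
apply: dv_add => //; rewrite -mul_mpolyC; apply: dv_mul; first exact: dv_C.
rewrite mpolyXE_id; apply: dv_prod => i; apply: dv_exp; apply: dv_X.
Qed.

Lemma div_sub0 P : sub a b P = 0 -> exists Q, P = ('X_b - 'X_a) * Q.
Proof. by move=> h; have [Q hQ] := dv_all P; exists Q; rewrite -hQ h subr0. Qed.

End DV.

Lemma bnd_bin (c e : 'I_k) (al be : F) : c != e ->
  bnd (al%:MP * 'X_c + be%:MP * 'X_e : Rz)
      (if (c < e)%N then (mnm1 c) else (mnm1 e))%MM (if (c < e)%N then al else be).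
Proof.
move=> nce.
have coef : forall m, (al%:MP * 'X_c + be%:MP * 'X_e : Rz)@_m =
    al * ((mnm1 c) == m)%:R + be * ((mnm1 e) == m)%:R.
  by move=> m; rewrite mcoeffD !mcoeffCM !mcoeffX.
have hU : forall x y : 'I_k, (x < y)%N -> mlt (mnm1 y) (mnm1 x).
  move=> x y xy; apply/mltP; exists x; split.
    move=> j jx; rewrite !mnm1E.
    have /negbTE -> : x != j by apply/eqP => ee; rewrite ee ltnn in jx.
    have /negbTE -> : y != j by apply/eqP => ee; move: (ltn_trans jx xy); rewrite ee ltnn.
    by [].
  by rewrite !mnm1E eqxx; case: eqP => // ey; rewrite ey ltnn in xy.
have neU : (mnm1 c) != (mnm1 e).
  apply: contra nce => /eqP h; have := congr1 (fun m : 'X_{1..k} => m c) h.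
  by rewrite /= !mnm1E eqxx; case: (eqVneq c e) => // nce2; rewrite eq_sym (negbTE nce2).
split.
  move=> m; rewrite mcoeff_msupp coef.
  have hle : mle (mnm1 c) (if (c < e)%N then mnm1 c else mnm1 e) /\
             mle (mnm1 e) (if (c < e)%N then mnm1 c else mnm1 e).
    case: ltngtP => [ce|ec|/val_inj ce]; rewrite ?mle_refl.
    - by split=> //; rewrite /mle hU ?orbT.
    - by split=> //; rewrite /mle hU ?orbT.
    - by rewrite ce eqxx in nce.
  case: (eqVneq (mnm1 c) m) => [<-|nc]; first by case: hle.
  case: (eqVneq (mnm1 e) m) => [<-|ne]; first by case: hle.
  by rewrite !mulr0 addr0 eqxx.
rewrite coef; case: ltngtP => [ce|ec|/val_inj ce].
- by rewrite eqxx eq_sym (negbTE neU) mulr1 mulr0 addr0.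
- by rewrite eqxx (negbTE neU) mulr1 mulr0 add0r.
- by rewrite ce eqxx in nce.
Qed.

Lemma reg_diff (c e : 'I_k) (u : Rz) : c != e -> ('X_e - 'X_c) * u = 0 -> u = 0.
Proof.
move=> nce h.
have := bnd_bin (-1) 1 nce.
have -> : ((-1)%:MP * 'X_c + 1%:MP * 'X_e : Rz) = 'X_e - 'X_c.
  by rewrite mpolyC1 mul1r mpolyCN mulN1r addrC.
move=> hb; apply: (bnd_reg (be := if (c < e)%N then -1 else 1) hb _ h).
by case: ifP => _; rewrite ?mulrNN ?mulr1 ?mul1r.
Qed.


Definition regular (x : Rz) := forall u, x * u = 0 -> u = 0.

Lemma reg_prod (I : eqType) (r : seq I) (G : I -> Rz) :
  (forall i, i \in r -> regular (G i)) -> regular (\prod_(i <- r) G i).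
Proof.
elim: r => [|x r IH] h u; first by rewrite big_nil mul1r.
rewrite big_cons -mulrA => /(h x (mem_head _ _)).
by apply: IH => i hi; apply: h; rewrite in_cons hi orbT.
Qed.

Lemma sub_diff_reg (a b c d : 'I_k) : (a < b)%N -> (c < d)%N -> (c, d) != (a, b) ->
  regular (sub a b ('X_d - 'X_c)).
Proof.
move=> ab cd ne u; rewrite subB !subX.
case: (eqVneq c b) => [cb|cb]; case: (eqVneq d b) => [db|db].
- by rewrite cb db ltnn in cd.
- apply: reg_diff.
  by apply/eqP => ad; move: cd; rewrite cb -ad ltnNge (ltnW ab).
- apply: reg_diff.
  apply: contra ne => /eqP ca; by rewrite ca db.
- apply: reg_diff.
  by apply/eqP => e; rewrite e ltnn in cd.
Qed.

Lemma div_all (P : Rz) : (forall a b : 'I_k, (a < b)%N -> sub a b P = 0) ->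
  exists M, P = Dden F 1 * M.
Proof.
move=> hP.
have key : forall L : seq ('I_k * 'I_k), uniq L -> all (fun x : 'I_k * 'I_k => (x.1 < x.2)%N) L ->
  exists M, P = (\prod_(x <- L) ('X_x.2 - 'X_x.1)) * M.
  elim=> [|[a b] L IH]; first by exists P; rewrite big_nil mul1r.
  rewrite cons_uniq => /andP [xL uL] /andP [hx aL].
  have [M hM] := IH uL aL.
  have hs : sub a b P = 0 by apply: hP.
  rewrite hM subM sub_prod in hs.
  have hreg : regular (\prod_(y <- L) sub a b ('X_y.2 - 'X_y.1)).
    apply: reg_prod => -[c d] yL.
    apply: sub_diff_reg => //; first by move/allP: aL => /(_ _ yL).
    by apply: contraNneq xL => <-.
  have [Q hQ] := div_sub0 (hreg _ hs).
  by exists Q; rewrite hM big_cons hQ mulrA [_ * ('X_b - _)]mulrC.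
have [M hM] := key [seq x <- index_enum {: 'I_k * 'I_k} | (fun x : 'I_k * 'I_k => (x.1 < x.2)%N) x]
  (filter_uniq _ (index_enum_uniq _)) (filter_all _ _).
exists M; rewrite hM; congr (_ * _).
rewrite /Dden pair_big_dep big_filter; apply: eq_bigr => x _.
by rewrite !perm1.
Qed.

End Div.

End PartD1.
Import PartD1.

Module PartD2.
Set Implicit Arguments.
Unset Strict Implicit.
Unset Printing Implicit Defensive.
Import GRing.Theory.
Local Open Scope ring_scope.

Section Rel.
Variables (k : nat) (F : comNzRingType) (D : 'I_k -> 'I_k -> F).
Hypothesis HF : Fk_relations D.

Definition dv (c e : 'I_k) : F := if c == e then 0 else D c e.

Lemma dv_sym c e : dv c e = dv e c.
Proof. by rewrite /dv eq_sym; case: eqP => //; case: HF => ->. Qed.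

Definition nrm (u w : 'I_k) := if (u <= w)%N then (u, w) else (w, u).

Lemma nrm_sym u w : nrm u w = nrm w u.
Proof.
rewrite /nrm; case: (ltngtP u w) => [uw|wu|/val_inj ->] //.
Qed.

Lemma dv_nrm u w : (if (nrm u w).1 == (nrm u w).2 then 0 else D (nrm u w).1 (nrm u w).2) = dv u w.
Proof. rewrite /nrm /dv; case: (u <= w)%N => /=; first by []. rewrite eq_sym; case: eqP => // _; case: HF => h _; exact: h. Qed.

Lemma pair_renE (s : 'S_k) v :
  pair_ren s v = enum_rank (nrm (s (enum_val v).1) (s (enum_val v).2)).
Proof. by []. Qed.

Lemma nrm_map (t : 'S_k) u w : nrm (t (nrm u w).1) (t (nrm u w).2) = nrm (t u) (t w).
Proof.
have [->|->] : nrm u w = (u, w) \/ nrm u w = (w, u) by rewrite /nrm; case: ifP; auto.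
  by [].
by rewrite /= nrm_sym.
Qed.

Lemma pr_comp (s t : 'S_k) v : pair_ren t (pair_ren s v) = pair_ren (s * t)%g v.
Proof. by rewrite !pair_renE enum_rankK !permM nrm_map. Qed.

Lemma devalX v : deval D 'X_v =
  (if (enum_val v).1 == (enum_val v).2 then 0 else D (enum_val v).1 (enum_val v).2).
Proof. by rewrite /deval mmapX mmap1U. Qed.

Lemma devalR c e : deval D 'X_(enum_rank (c, e)) = dv c e.
Proof. by rewrite devalX enum_rankK. Qed.

Lemma dactX (s : 'S_k) v : dact s 'X_v = 'X_(pair_ren s v).
Proof. by rewrite /dact mmapX mmap1U. Qed.

Lemma dact_prodX (s : 'S_k) (I : Type) (r : seq I) (P : pred I) (w : I -> 'I_(npairs k)) :
  dact s (\prod_(i <- r | P i) 'X_(w i)) = \prod_(i <- r | P i) 'X_(pair_ren s (w i)).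
Proof. by rewrite /dact rmorph_prod; apply: eq_bigr => i _; exact: dactX. Qed.

Lemma dactB (s : 'S_k) (P Q : dexpr k) : dact s (P - Q) = dact s P - dact s Q.
Proof. by rewrite /dact rmorphB. Qed.

Lemma devalB (P Q : dexpr k) : deval D (P - Q) = deval D P - deval D Q.
Proof. by rewrite /deval rmorphB. Qed.

Lemma deval_prodX (I : Type) (r : seq I) (P : pred I) (w : I -> 'I_(npairs k)) :
  deval D (\prod_(i <- r | P i) 'X_(w i)) = \prod_(i <- r | P i) deval D 'X_(w i).
Proof. by rewrite /deval rmorph_prod. Qed.

Variables a b : 'I_k.
Hypothesis ab : a != b.
Local Notation tau := (tperm a b).

Lemma relation_lemma (I : finType) (P : pred I) (c1 c2 : I -> 'I_k) :
  D a b * (\prod_(i | P i) dv (c1 i) (c2 i) - \prod_(i | P i) dv (tau (c1 i)) (tau (c2 i))) = 0.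
Proof.
pose Q : dexpr k := \prod_(i | P i) 'X_(enum_rank (c1 i, c2 i)).
have := (proj2 HF) a b ab (Q - dact tau Q).
have anti : antisym a b (Q - dact tau Q).
  rewrite /antisym !dactB /Q !dact_prodX.
  have e1 : forall v, pair_ren tau (pair_ren tau v) = pair_ren 1 v.
    by move=> v; rewrite pr_comp tperm2.
  have e2 : forall v, pair_ren 1 (pair_ren tau v) = pair_ren tau v.
    by move=> v; rewrite pr_comp mulg1.
  have -> : \prod_(i | P i) 'X_(pair_ren tau (pair_ren tau (enum_rank (c1 i, c2 i))))
     = \prod_(i | P i) 'X_(pair_ren 1 (enum_rank (c1 i, c2 i))) :> dexpr k.
    by apply: eq_bigr => i _; rewrite e1.
  have -> : \prod_(i | P i) 'X_(pair_ren 1 (pair_ren tau (enum_rank (c1 i, c2 i))))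
     = \prod_(i | P i) 'X_(pair_ren tau (enum_rank (c1 i, c2 i))) :> dexpr k.
    by apply: eq_bigr => i _; rewrite e2.
  by rewrite opprB addrC.
move=> /(_ anti) <-; congr (_ * _).
rewrite devalB /Q dact_prodX !deval_prodX; congr (_ - _).
  by apply: eq_bigr => i _; rewrite devalR.
apply: eq_bigr => i _; rewrite pair_renE devalX !enum_rankK.
by rewrite dv_nrm.
Qed.


Local Notation Rz := {mpoly F[k]}.

Lemma expand_prod (I : finType) (u v : I -> Rz) (d : I -> F) :
  \prod_i (u i + (d i)%:MP * v i) =
  \sum_(f : {ffun I -> bool}) (\prod_(i | f i) d i)%:MP * \prod_i (if f i then v i else u i).
Proof.
transitivity (\prod_i \sum_(be : bool) (if be then (d i)%:MP * v i else u i)).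
  by apply: eq_bigr => i _; rewrite big_bool /= addrC.
rewrite bigA_distr_bigA; apply: eq_bigr => f _.
rewrite rmorph_prod [X in _ = X * _]big_mkcond -big_split /=; apply: eq_bigr => i _.
by case: (f i); rewrite ?mul1r.
Qed.

Lemma KL (I : finType) (Pr : pred I) (u v : I -> Rz) (c1 c2 : I -> 'I_k) :
  (forall i, Pr i -> c1 i != c2 i) ->
  (D a b)%:MP * (\prod_(i | Pr i) (u i + (D (c1 i) (c2 i))%:MP * v i)
      - \prod_(i | Pr i) (u i + (D (tau (c1 i)) (tau (c2 i)))%:MP * v i)) = 0.
Proof.
move=> hc.
have conv : forall c1' c2' : I -> 'I_k, (forall i, Pr i -> c1' i != c2' i) ->
   \prod_(i | Pr i) (u i + (D (c1' i) (c2' i))%:MP * v i) =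
   \prod_i ((if Pr i then u i else 1) + (dv (c1' i) (c2' i))%:MP * (if Pr i then v i else 0)).
  move=> c1' c2' h; rewrite big_mkcond; apply: eq_bigr => i _.
  by case: ifP => Pi; [rewrite /dv (negbTE (h i Pi)) | rewrite mulr0 addr0].
rewrite !conv //; last by move=> i Pi; rewrite (inj_eq (@perm_inj _ _)) hc.
rewrite !expand_prod -sumrB mulr_sumr big1 // => f _.
rewrite -mulrBl mulrA -rmorphB -rmorphM /= relation_lemma.
by rewrite mul0r.
Qed.

End Rel.

Section Vanish.
Variables (k : nat) (F : comNzRingType) (D : 'I_k -> 'I_k -> F).
Hypothesis HF : Fk_relations D.
Variables (q : nat) (n : 'I_k -> int).
Local Notation Rz := {mpoly F[k]}.

Lemma pmX (s : 'S_k) : 'X_[pm q n s] = \prod_(i < k) 'X_(s i) ^+ pp q n i :> Rz.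
Proof. rewrite (mpolyXE _ s); apply: eq_bigr => i _; by rewrite mnmE permK. Qed.

Variables a b : 'I_k.
Hypothesis hab : (a < b)%N.
Local Notation tau := (tperm a b).

Lemma nab : a != b.
Proof. by apply/eqP => e; move: hab; rewrite e ltnn. Qed.

Lemma subX_tau c : sub a b ('X_(tau c) : Rz) = sub a b 'X_c.
Proof.
rewrite !subX; case: tpermP => [->|->|h1 h2]; rewrite ?eqxx ?(negbTE nab) //.
Qed.

Lemma sub_fpol d c e : sub a b (fpol d c e : Rz) =
   (sub a b 'X_e - sub a b 'X_c) + d%:MP * sub a b 'X_c.
Proof. by rewrite /fpol subD subB subM subC. Qed.

Lemma sub_sign x : sub a b ((-1) ^+ x : Rz) = (-1) ^+ x.
Proof. by rewrite /sub rmorph_sign. Qed.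

Lemma sub_pm (s : 'S_k) : sub a b ('X_[pm q n s] : Rz) = sub a b 'X_[pm q n (s * tau)%g].
Proof.
rewrite !pmX !sub_prod; apply: eq_bigr => i _; by rewrite !subXn permM subX_tau.
Qed.

Lemma sub_Pf (s : 'S_k) : ((s^-1)%g a < (s^-1)%g b)%N ->
  sub a b (Pf D s) = sub a b (Pf D (s * tau)%g).
Proof.
move=> hs; apply/eqP; rewrite -subr_eq0; apply/eqP.
rewrite /Pf !sub_prod.
rewrite (eq_bigr (fun i : 'I_k => \prod_(j < k | (i < j)%N) sub a b (fpol (D (s i) (s j)) (s i) (s j))));
  last by move=> i _; rewrite sub_prod.
rewrite [X in _ - X](eq_bigr (fun i : 'I_k => \prod_(j < k | (i < j)%N)
    sub a b (fpol (D ((s * tau)%g i) ((s * tau)%g j)) ((s * tau)%g i) ((s * tau)%g j))));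
  last by move=> i _; rewrite sub_prod.
rewrite !pair_big_dep /=.
pose x0 := ((s^-1)%g a, (s^-1)%g b).
have hx0 : (x0.1 < x0.2)%N by [].
rewrite (bigD1 x0) //= [X in _ - X](bigD1 x0) //=.
rewrite !permM !permKV tpermL tpermR !sub_fpol !subX eqxx (negbTE nab).
have -> : D b a = D a b by case: HF => ->.
set fa := (_ - _ + _).
rewrite -mulrBr.
set P1 := \prod_(i | _) _; set P2 := \prod_(i | _) _.
have e1 : P1 = \prod_(x : 'I_k * 'I_k | (x.1 < x.2)%N && (x != x0))
   ((sub a b 'X_(s x.2) - sub a b 'X_(s x.1)) + (D (s x.1) (s x.2))%:MP * sub a b 'X_(s x.1)).
  by apply: eq_bigr => x _; rewrite sub_fpol.
have e2 : P2 = \prod_(x : 'I_k * 'I_k | (x.1 < x.2)%N && (x != x0))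
   ((sub a b 'X_(s x.2) - sub a b 'X_(s x.1)) + (D (tau (s x.1)) (tau (s x.2)))%:MP * sub a b 'X_(s x.1)).
  by apply: eq_bigr => x _; rewrite sub_fpol !permM !subX_tau.
rewrite /fa subrr add0r [_ * 'X_a]mulrC -mulrA e1 e2 (KL HF nab) ?mulr0 //.
move=> x /andP [hx _]; rewrite (inj_eq (@perm_inj _ _)).
by apply/eqP => e; rewrite e ltnn in hx.
Qed.

Lemma vanish : sub a b (Nsum q D n) = 0.
Proof.
rewrite /Nsum sub_sum (bigID (fun s : 'S_k => ((s^-1)%g a < (s^-1)%g b)%N)) /=.
rewrite [X in _ + X](reindex_inj (mulIg tau)) /=.
have hp : forall s : 'S_k, ~~ (((s * tau)^-1)%g a < ((s * tau)^-1)%g b)%N =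
                          ((s^-1)%g a < (s^-1)%g b)%N.
  move=> s; rewrite invMg tpermV !permM tpermL tpermR -leqNgt leq_eqVlt.
  by rewrite val_eqE (inj_eq (@perm_inj _ _)) (negbTE nab).
rewrite (eq_bigl _ _ hp) -big_split big1 //= => s hs.
rewrite !subM !sub_sign odd_permM odd_tperm nab signr_addb expr1.
by rewrite -sub_pm -sub_Pf // mulrN1 mulNr addrN.
Qed.

End Vanish.

End PartD2.
Import PartD2.

Module PartG.
Set Implicit Arguments.
Unset Strict Implicit.
Unset Printing Implicit Defensive.
Import GRing.Theory Num.Theory.
Local Open Scope ring_scope.

Section Lead.
Variables (k : nat) (F : comNzRingType).
Local Notation Rz := {mpoly F[k]}.

Definition mu (s : 'S_k) : 'X_{1..k} :=
  (\sum_(i <- index_enum 'I_k) \sum_(j <- index_enum 'I_k | (i < j)%N)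
     (if (s i < s j)%N then mnm1 (s i) else mnm1 (s j)))%MM.

Lemma bnd_fpol (d : F) (c e : 'I_k) : c != e ->
  bnd (fpol d c e : Rz) (if (c < e)%N then mnm1 c else mnm1 e) (if (c < e)%N then d - 1 else 1).
Proof.
move=> ce; have := bnd_bin (d - 1) 1 ce.
have -> : ((d - 1)%:MP * 'X_c + 1%:MP * 'X_e : Rz) = fpol d c e.
  rewrite /fpol mpolyC1 mul1r (rmorphB (@mpolyC k F)) rmorph1; ring.
by [].
Qed.

Lemma bnd_diff (c e : 'I_k) : c != e ->
  bnd ('X_e - 'X_c : Rz) (if (c < e)%N then mnm1 c else mnm1 e) (if (c < e)%N then -1 else 1).
Proof.
move=> ce; have := bnd_bin (F:=F) (-1) 1 ce.
have -> : ((-1)%:MP * 'X_c + 1%:MP * 'X_e : Rz) = 'X_e - 'X_c.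
  by rewrite mpolyC1 mul1r mpolyCN mulN1r addrC.
by [].
Qed.

Definition cd (s : 'S_k) : F :=
  \prod_(i <- index_enum 'I_k) \prod_(j <- index_enum 'I_k | (i < j)%N) (if (s i < s j)%N then -1 else 1).

Lemma bnd_Dden (s : 'S_k) : bnd (Dden F s) (mu s) (cd s).
Proof.
apply: bnd_prod => i _ _; apply: bnd_prod => j _ ij.
apply: bnd_diff; rewrite (inj_eq (@perm_inj _ _)); apply/eqP => e.
by rewrite e ltnn in ij.
Qed.

Definition cf (D : 'I_k -> 'I_k -> F) (s : 'S_k) : F :=
  \prod_(i <- index_enum 'I_k) \prod_(j <- index_enum 'I_k | (i < j)%N)
     (if (s i < s j)%N then D (s i) (s j) - 1 else 1).

Lemma bnd_Pf (D : 'I_k -> 'I_k -> F) (s : 'S_k) : bnd (Pf D s) (mu s) (cf D s).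
Proof.
apply: bnd_prod => i _ _; apply: bnd_prod => j _ ij.
apply: bnd_fpol; rewrite (inj_eq (@perm_inj _ _)); apply/eqP => e.
by rewrite e ltnn in ij.
Qed.

Definition cc (D : 'I_k -> 'I_k -> F) (s : 'S_k) : F :=
  \prod_(i <- index_enum 'I_k) \prod_(j <- index_enum 'I_k | (i < j)%N)
     (if (s i < s j)%N then 1 - D (s i) (s j) else 1).

Lemma cf_cd D s : cf D s = cd s * cc D s.
Proof.
rewrite /cf /cd /cc -big_split; apply: eq_bigr => i _.
rewrite -big_split; apply: eq_bigr => j _.
by case: ifP => _ /=; [rewrite mulN1r opprB | rewrite mulr1].
Qed.

Lemma cd1_sq : cd 1 * cd 1 = 1.
Proof.
rewrite /cd -big_split big1 // => i _; rewrite -big_split big1 // => j _.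
by case: ifP => _ /=; rewrite ?mulrNN mulr1.
Qed.

Lemma sign_F (s : 'S_k) : ((-1) ^+ odd_perm s : Rz) = ((-1) ^+ odd_perm s : F)%:MP.
Proof. by rewrite rmorph_sign. Qed.

Lemma mu_eq (s : 'S_k) : mu s = mu 1 /\ cd s = (-1) ^+ odd_perm s * cd 1.
Proof.
have h1 := bnd_Dden s.
have h2 : bnd (Dden F s) (mu 1) ((-1) ^+ odd_perm s * cd 1).
  rewrite Dden_sign; case: (odd_perm s) => /=.
    by rewrite expr1 !mulN1r; apply: bndN; apply: bnd_Dden.
  by rewrite expr0 !mul1r; apply: bnd_Dden.
have nz : forall x : F, x * x = 1 -> x != 0.
  by move=> x hx; apply/eqP => x0; move: hx; rewrite x0 mul0r => /eqP; rewrite eq_sym oner_eq0.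
have nzs : (-1) ^+ odd_perm s * cd 1 != 0.
  apply: nz; rewrite mulrACA cd1_sq mulr1 -expr2 sqrr_sign //.
have nzd : cd s != 0.
  apply: nz; rewrite /cd -big_split big1 // => i _; rewrite -big_split big1 // => j _.
  by case: ifP => _ /=; rewrite ?mulrNN mulr1.
have e := bnd_uniq h1 h2 nzd nzs.
split=> //; case: h1 => _ <-; case: h2 => _ <-; by rewrite e.
Qed.

End Lead.

End PartG.
Import PartG.

Module PartH.
Set Implicit Arguments.
Unset Strict Implicit.
Unset Printing Implicit Defensive.
Import GRing.Theory Num.Theory.
Local Open Scope ring_scope.

Section Main.
Variables (k : nat) (n : 'I_k -> int).
Hypothesis Hn : forall i j : 'I_k, (i <= j)%N -> n j <= n i.
Variables (F : comNzRingType) (D : 'I_k -> 'I_k -> F).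
Hypothesis HF : Fk_relations D.
Local Notation Rz := {mpoly F[k]}.

Definition qq : nat := (\sum_(i < k) `|n i|)%N.

Lemma hq i : 0 <= qq%:Z + n i.
Proof.
have h : (`|n i| <= qq)%N by rewrite /qq (bigD1 i) //= leq_addr.
lia.
Qed.

Local Notation p := (pp qq n).

Lemma pE i : (p i)%:Z = qq%:Z + n i.
Proof. by rewrite /pp gez0_abs // hq. Qed.

Lemma hpp : forall i j : 'I_k, (i <= j)%N -> (p j <= p i)%N.
Proof. move=> i j ij; have := Hn ij; have := pE i; have := pE j; lia. Qed.

Definition pmono : 'X_{1..k} := [multinom p j | j < k].
Local Notation N := (Nsum qq D n).
Local Notation W := (Dden F 1).
Local Notation mV := (mu 1).
Local Notation lcW := (@cd k F 1).

Lemma mcoeff_sign (b : bool) (A : Rz) m : ((-1) ^+ b * A)@_m = (-1) ^+ b * A@_m.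
Proof. by case: b; rewrite ?expr0 ?expr1 ?mul1r ?mulN1r ?mcoeffN. Qed.

Lemma coefN m : N@_m = \sum_(s : 'S_k) (-1) ^+ odd_perm s * ('X_[pm qq n s] * Pf D s)@_m.
Proof. rewrite /Nsum raddf_sum; apply: eq_bigr => s _; exact: mcoeff_sign. Qed.

Lemma bnd_term (s : 'S_k) : bnd ('X_[pm qq n s] * Pf D s) (pm qq n s + mV)%MM (cf D s).
Proof.
have := bndM (@bndX k F (pm qq n s)) (bnd_Pf D s).
by rewrite mul1r (proj1 (mu_eq F s)).
Qed.

Lemma pm_le (s : 'S_k) : mle (pm qq n s) pmono.
Proof. exact: (perm_mle hpp (s^-1)%g). Qed.

Lemma N_zero m : mlt (pmono + mV)%MM m -> N@_m = 0.
Proof.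
move=> h; rewrite coefN big1 // => s _.
rewrite (bnd_coef_lt (bnd_term s)) ?mulr0 //.
apply: mle_mlt_trans h; apply: mle_add (pm_le s) (mle_refl _).
Qed.

Lemma N_top : N@_(pmono + mV) =
  \sum_(s : 'S_k | pm qq n s == pmono) (-1) ^+ odd_perm s * cf D s.
Proof.
rewrite coefN (bigID (fun s : 'S_k => pm qq n s == pmono)) /=.
rewrite [X in _ + X]big1 ?addr0.
  apply: eq_bigr => s /eqP hs; congr (_ * _).
  by have [_] := bnd_term s; rewrite hs.
move=> s hs; rewrite (bnd_coef_lt (bnd_term s)) ?mulr0 //.
apply: mlt_addr; have := pm_le s; rewrite /mle (negbTE hs) //.
Qed.


Variable M : Rz.
Hypothesis hM : N = W * M.

Lemma lcW_sq : lcW * lcW = 1.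
Proof. exact: cd1_sq. Qed.

Lemma M_le : forall m, m \in msupp M -> mle m pmono.
Proof.
case: (eqVneq M 0) => [->|nz]; first by move=> m; rewrite msupp0.
have [ms [hms nzms]] := bnd_max nz.
suff : mle ms pmono.
  by move=> h m hm; apply: mle_trans h; case: hms => h1 _; apply: h1.
rewrite mleNgt; apply/negP => lt.
have [_] := bndM (bnd_Dden F 1) hms.
rewrite -hM N_zero; last by rewrite addmC; apply: mlt_addl.
move/(congr1 (fun x => lcW * x)); rewrite mulr0 mulrA lcW_sq mul1r => /esym/eqP.
by rewrite (negbTE nzms).
Qed.

Lemma M_top : M@_pmono = \sum_(s : 'S_k | pm qq n s == pmono) cc D s.
Proof.
have hb : bnd M pmono M@_pmono by split=> //; apply: M_le.
have [_] := bndM (bnd_Dden F 1) hb.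
rewrite -hM addmC N_top => e.
have e2 : \sum_(s : 'S_k | pm qq n s == pmono) (-1) ^+ odd_perm s * cf D s =
          lcW * \sum_(s : 'S_k | pm qq n s == pmono) cc D s.
  rewrite mulr_sumr; apply: eq_bigr => s _.
  rewrite cf_cd (proj2 (mu_eq F s)) !mulrA -expr2 sqrr_sign mul1r //.
rewrite e2 in e.
rewrite -[LHS]mul1r -lcW_sq -mulrA -e mulrA lcW_sq mul1r //.
Qed.

End Main.

End PartH.
Import PartH.

Module PartI.
Set Implicit Arguments.
Unset Strict Implicit.
Unset Printing Implicit Defensive.
Import GRing.Theory Num.Theory.
Local Open Scope ring_scope.

Section Lead2.
Variables (k : nat) (n : 'I_k -> int).
Hypothesis Hn : forall i j : 'I_k, (i <= j)%N -> n j <= n i.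
Variables (F : comNzRingType) (D : 'I_k -> 'I_k -> F).
Local Notation p := (pp (qq n) n).

Lemma adm_iff (t : 'S_k) : admissible n (t^-1)%g = (pm (qq n) n t == pmono n).
Proof.
have E2 : forall i j, (p i == p j) = (n i == n j).
  move=> i j; apply/eqP/eqP => h; last by rewrite /pp h.
  by have := pE n i; have := pE n j; rewrite h; lia.
have hpp := hpp Hn.
apply/idP/idP.
- move=> /forallP adm; apply/eqP/mnmP => j; rewrite !mnmE.
  apply: (proj2 (perm_fix_adm hpp (t^-1)%g)) => i j' ji hij.
  have := adm i => /forallP /(_ j'); rewrite ji hij /= => /eqP e.
  by rewrite /pp e.
- move=> /eqP hm.
  have h : forall j, p ((t^-1)%g j) = p j.
    by move=> j; move: (congr1 (fun m : 'X_{1..k} => m j) hm); rewrite !mnmE.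
  have adm := proj1 (perm_fix_adm hpp _) h.
  apply/forallP => i; apply/forallP => j; apply/implyP => /andP [ji hij].
  by rewrite -E2; apply/eqP; apply: adm.
Qed.

Lemma body_eq (t : 'S_k) :
  \prod_(i : 'I_k) \prod_(j : 'I_k | (i < j)%N && ((t^-1)%g i < (t^-1)%g j)%N) (1 - D i j)
  = cc D t.
Proof.
rewrite /cc; symmetry.
rewrite (eq_bigr (fun i : 'I_k => \prod_(j : 'I_k | (i < j)%N && (t i < t j)%N) (1 - D (t i) (t j))));
  last by move=> i _; rewrite big_mkcondr.
symmetry.
rewrite !pair_big_dep /=.
pose h := fun y : 'I_k * 'I_k => (t y.1, t y.2).
have hi : injective h.
  by move=> [y1 y2] [z1 z2] [/perm_inj -> /perm_inj ->].
rewrite (reindex_inj hi) /=; apply: eq_bigl => y.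
by rewrite !permK andbC.
Qed.

Lemma lead_eq : lead_coef_shuffle D n = \sum_(s : 'S_k | pm (qq n) n s == pmono n) cc D s.
Proof.
rewrite /lead_coef_shuffle (reindex_inj invg_inj) /=.
apply: eq_big => t; first by rewrite adm_iff.
by move=> _; rewrite body_eq.
Qed.

End Lead2.

End PartI.
Import PartI.

Module PartFin.
Set Implicit Arguments.
Unset Strict Implicit.
Unset Printing Implicit Defensive.
Import GRing.Theory Num.Theory.
Local Open Scope ring_scope.

Section Final.
Variables (k : nat) (F : comNzRingType) (q : nat).
Local Notation Rz := {mpoly F[k]}.

Lemma zmono_feq (m : 'I_k -> int) : (forall i, 0 <= q%:Z + m i) ->
  feq (zmono F m) ('X_[[multinom absz (q%:Z + m i)%R | i < k]], Zq k F q).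
Proof.
move=> h; rewrite /zmono; apply: feq_eqr.
  by apply: feq_bigfmul => i _; apply: zpow_feq.
rewrite bigfmulE mpolyXE_id /Zq; congr pair; apply: eq_bigr => i _; by rewrite mnmE.
Qed.

Lemma feq_fconst (c : Rz) (x : Defs.frac Rz) A B : feq x (A, B) ->
  feq (fmul (fconst c) x) (c * A, B).
Proof. rewrite /feq /= => h; rewrite mul1r -mulrA h; ring. Qed.

Lemma feq_final (x y : Defs.frac Rz) (M Z W : Rz) : regular (Z * W) ->
  feq x (W * M, Z * W) -> feq y (M, Z) -> feq x y.
Proof.
rewrite /feq /= => hr h1 h2; apply/eqP; rewrite -subr_eq0; apply/eqP.
apply: hr.
have -> : Z * W * (x.1 * y.2 - y.1 * x.2) = (x.1 * (Z * W)) * y.2 - W * x.2 * (y.1 * Z) by ring.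
rewrite h1 h2; ring.
Qed.

End Final.


End PartFin.
Import PartFin.

Unset Implicit Arguments.
Set Strict Implicit.
Set Printing Implicit Defensive.

Theorem proposition4p6 (k : nat) (n : 'I_k -> int)
    (Hn : forall i j : 'I_k, (i <= j)%N -> n j <= n i)
    (F : comNzRingType) (D : 'I_k -> 'I_k -> F)
    (HF : Fk_relations D) :
  exists r : seq ({ffun 'I_k -> int} * F),
    (forall mc, mc \in r -> lexlt mc.1 n) /\
    feq (shuffle_monomials D n)
        (fadd (fmul (fconst (lead_coef_shuffle D n)%:MP) (zmono F n))
              (laurent r)).
Proof.
set q := qq n.
have hqn : forall i, 0 <= q%:Z + n i := hq n.
have hS := shuffle_feq D hqn.
have [M hM] := div_all (fun a b ab => vanish HF q n ab).
pose L := [seq m <- msupp M | m != pmono n].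
pose r := [seq ([ffun i : 'I_k => (m i)%:Z - q%:Z], M@_m) | m : 'X_{1..k} <- L].
exists r; split.
  move=> mc /mapP [m]; rewrite mem_filter => /andP [mp mM] -> /=.
  have := M_le Hn hM mM; rewrite /mle (negbTE mp) orFb => /mltP [i [h1 h2]].
  exists i; split.
    move=> j ji; rewrite ffunE h1 // mnmE; have := pE n j; rewrite -/q; lia.
  rewrite ffunE; move: h2; rewrite mnmE; have := pE n i; rewrite -/q; lia.
rewrite hM in hS; apply: (feq_final _ hS).
  have hZ : bnd (Zq k F q) [multinom q | i < k] 1.
    have -> : Zq k F q = 'X_[[multinom q | i < k]].
      by rewrite mpolyXE_id /Zq; apply: eq_bigr => i _; rewrite mnmE.
    exact: bndX.
  have hb := bndM hZ (bnd_Dden F 1).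
  have hu1 : @cd k F 1 * (1 * @cd k F 1) = 1 by rewrite mul1r; exact: cd1_sq.
  move=> u hu; exact: (bnd_reg hb hu1 hu).
set lead := lead_coef_shuffle D n.
have e1 : feq (fmul (fconst lead%:MP) (zmono F n)) (lead%:MP * 'X_[pmono n], Zq k F q).
  by apply: feq_fconst; exact: (@zmono_feq k F q n hqn).
have e2 : feq (laurent r) (\sum_(m <- L) (M@_m)%:MP * 'X_[m], Zq k F q).
  rewrite /laurent big_map; apply: feq_bigfadd => m _ /=; apply: feq_fconst.
  have h : forall i, 0 <= q%:Z + [ffun i : 'I_k => (m i)%:Z - q%:Z] i.
    by move=> i; rewrite ffunE addrC subrK.
  apply: feq_eqr (@zmono_feq k F q _ h) _; congr pair; congr 'X_[_]; apply/mnmP => i.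
  by rewrite mnmE ffunE addrC subrK.
have e3 := feq_fadd_common e1 e2.
apply: feq_eqr e3 _; congr pair.
rewrite /lead (lead_eq Hn D) -(M_top Hn hM).
rewrite [RHS](mpolyE M) [RHS](bigID (fun m => m == pmono n)) /=.
congr (_ + _); last by rewrite /L big_filter; apply: eq_bigr => m _; rewrite mul_mpolyC.
rewrite mul_mpolyC; case: (boolP (pmono n \in msupp M)) => hp.
  by rewrite -big_filter filter_pred1_uniq ?msupp_uniq // big_seq1.
rewrite big1_seq; last by move=> m /andP [/eqP -> hm]; rewrite hm in hp.
by move: hp; rewrite mcoeff_msupp negbK => /eqP ->; rewrite scale0r.
Qed.
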